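(* Let $G$ be a connected $m$-uniform hypergraph on $n$ vertices. Suppose its incidence matrix $B_G$ has Smith normal form over $\mathbb{Z}_m$ with nonzero diagonal entries $d_1,\dots,d_r$. Then $|\mathbb{PV}_0(\mathcal{L}(G))|=s(\mathcal{L}(G))=s(\mathcal{A}(G))=m^{n-1-r}\prod_{i=1}^r d_i$.
   Context: An $m$-uniform hypergraph $G$ on vertices $v_1,\dots,v_n$ has edges that are $m$-subsets; it is connected in the usual sense. Adjacency tensor $\mathcal{A}(G)$: order $m$, dimension $n$, entry $\frac1{(m-1)!}$ at $(i_1,\dots,i_m)$ if $\{v_{i_1},\dots,v_{i_m}\}$ is an edge, $0$ otherwise. $\mathcal{L}(G)=\mathcal{D}(G)-\mathcal{A}(G)$, where $\mathcal{D}(G)$ is diagonal with the vertex degrees. Incidence matrix $B_G$: rows indexed by edges, columns by vertices, $b_{e,v}=1$ if $v\in e$, else $0$. Smith normal form over $\mathbb{Z}_m$: invertible $P,Q$ over $\mathbb{Z}_m$ with $PB_GQ$ diagonal with entries $d_1,\dots,d_r,0,\dots,0$, $1\le d_i\le m-1$, $d_i\mid d_{i+1}$, $d_i\mid m$. For a tensor $\mathcal{T}$, $(\mathcal{T}x^{m-1})_i=\sum_{i_2,\dots,i_m}t_{ii_2\cdots i_m}x_{i_2}\cdots x_{i_m}$ and $\mathbb{PV}_\lambda(\mathcal{T})=\{x\in\mathbb{P}^{n-1}:\mathcal{T}x^{m-1}=\lambda x^{[m-1]}\}$ with $x^{[m-1]}=(x_i^{m-1})$. Stabilizing index: $s(\mathcal{T})=|\{D=\mathrm{diag}(d_1,\dots,d_n)\text{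 invertible complex}:\mathcal{T}=D^{-(m-1)}\mathcal{T}D,\ d_1=1\}|$, where $D^{-(m-1)}\mathcal{T}D$ has entries $d_{i_1}^{-(m-1)}t_{i_1\cdots i_m}d_{i_2}\cdots d_{i_m}$. *)

(* Defs.v *)
From HB Require Import structures.
From mathcomp Require Import all_boot all_order all_algebra.
From mathcomp Require Import complex.
From mathcomp Require Import reals.
Set Implicit Arguments. Unset Strict Implicit. Unset Printing Implicit Defensive.
Import Order.TTheory GRing.Theory Num.Theory.
Local Open Scope ring_scope.

Definition uniform (n m : nat) (E : {set {set 'I_n}}) : Prop :=
  forall e, e \in E -> #|e| = m.

Definition hadj (n : nat) (E : {set {set 'I_n}}) : rel 'I_n :=
  fun u v => [exists e in E, (u \in e) && (v \in e)].

Definition hconnected (n : nat) (E : {set {set 'I_n}}) : Prop :=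
  forall u v : 'I_n, connect (hadj E) u v.

Definition hdeg (n : nat) (E : {set {set 'I_n}}) (i : 'I_n) : nat :=
  #|[set e in E | i \in e]|.

(* A tensor of order m and dimension n over C: the entry t_{i i_2 ... i_m}
   is T i f where f : 'I_(m-1) -> 'I_n lists (i_2, ..., i_m). *)
Definition tensor (C : Type) (m n : nat) := 'I_n -> {ffun 'I_m.-1 -> 'I_n} -> C.

Definition idxset (n m : nat) (i : 'I_n) (f : {ffun 'I_m.-1 -> 'I_n}) : {set 'I_n} :=
  i |: [set f j | j : 'I_m.-1].

Definition adjT (C : numClosedFieldType) (n m : nat) (E : {set {set 'I_n}})
  : tensor C m n :=
  fun i f => if idxset i f \in E then ((m.-1)`!%:R)^-1 else 0.

Definition degT (C : numClosedFieldType) (n m : nat) (E : {set {set 'I_n}})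
  : tensor C m n :=
  fun i f => if [forall j, f j == i] then (hdeg E i)%:R else 0.

Definition lapT (C : numClosedFieldType) (n m : nat) (E : {set {set 'I_n}})
  : tensor C m n :=
  fun i f => @degT C n m E i f - @adjT C n m E i f.

Definition tapp (C : numClosedFieldType) (m n : nat) (T : tensor C m n)
  (x : 'I_n -> C) (i : 'I_n) : C :=
  \sum_(f : {ffun 'I_m.-1 -> 'I_n}) T i f * \prod_(j < m.-1) x (f j).

(* nonzero vectors x with T x^{m-1} = lam x^{[m-1]} (affine cone over PV_lam) *)
Definition eigcone (C : numClosedFieldType) (m n : nat) (T : tensor C m n)
  (lam : C) (x : 'I_n -> C) : Prop :=
  (exists i, x i != 0) /\ forall i, tapp T x i = lam * x i ^+ m.-1.

Definition proportional (C : numClosedFieldType) (n : nat) (x y : 'I_n -> C) : Prop :=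
  exists c : C, c != 0 /\ forall i, x i = c * y i.

(* The set of projective points {[x] : V x} has exactly N elements
   (V is a cone of nonzero vectors closed under nonzero scaling). *)
Definition proj_card (C : numClosedFieldType) (n : nat) (V : ('I_n -> C) -> Prop)
  (N : nat) : Prop :=
  exists X : 'I_N -> 'I_n -> C,
    (forall k, V (X k)) /\
    (forall k l, proportional (X k) (X l) -> k = l) /\
    (forall x, V x -> exists k, proportional x (X k)).

Definition set_card (C : Type) (n : nat) (P : ('I_n -> C) -> Prop) (N : nat) : Prop :=
  exists X : 'I_N -> 'I_n -> C,
    injective X /\ (forall k, P (X k)) /\ (forall d, P d -> exists k, d = X k).

(* D = diag(d) invertible with d_1 = 1 and T = D^{-(m-1)} T D *)
Definition stabilizes (C : numClosedFieldType) (m n : nat) (T : tensor C m n)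
  (d : 'I_n -> C) : Prop :=
  (forall i, d i != 0) /\ (forall i : 'I_n, val i = 0%N -> d i = 1) /\
  forall i f, T i f = (d i ^+ m.-1)^-1 * T i f * \prod_(j < m.-1) d (f j).

Definition stab_index_is (C : numClosedFieldType) (m n : nat) (T : tensor C m n)
  (N : nat) : Prop := set_card (stabilizes T) N.

Definition incidence (n m : nat) (E : {set {set 'I_n}}) : 'M['Z_m]_(#|E|, n) :=
  \matrix_(k < #|E|, v < n) (v \in (enum_val k : {set 'I_n}) : nat)%:R.

Definition smith_form_Zm (m p q : nat) (B : 'M['Z_m]_(p, q)) (ds : seq nat) : Prop :=
  (size ds <= minn p q)%N /\
  all (fun d => (1 <= d <= m.-1)%N) ds /\
  sorted dvdn ds /\
  all (fun d => d %| m)%N ds /\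
  exists (P : 'M['Z_m]_p) (Q : 'M['Z_m]_q),
    P \in unitmx /\ Q \in unitmx /\
    forall (i : 'I_p) (j : 'I_q),
      (P *m B *m Q) i j =
        if (val i == val j) && (val i < size ds)%N then (nth 0%N ds i)%:R else 0.

(* Main.v *)
Require Import Defs.
From HB Require Import structures.
From mathcomp Require Import all_boot all_order all_algebra.
From mathcomp Require Import complex.
From mathcomp Require Import reals.
From mathcomp Require Import separable cyclic.
From Stdlib Require Import FunctionalExtensionality.
Set Implicit Arguments. Unset Strict Implicit. Unset Printing Implicit Defensive.
Import Order.TTheory GRing.Theory Num.Theory.
Local Open Scope ring_scope.
From mathcomp Require Import zify ring.
Lemma prim_root_ex (C : numClosedFieldType) (m : nat) :
  (0 < m)%N -> exists w : C, m.-primitive_root w.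
Proof.
move=> m0.
pose p : {poly C} := 'X^m - 1.
have monp : p \is monic by rewrite monicXnsubC.
have [rs Hrs] := closed_field_poly_normal p.
rewrite (monicP monp) scale1r in Hrs.
have sz : size rs = m.
  have := congr1 (fun q : {poly C} => size q) Hrs.
  by rewrite size_prod_XsubC size_XnsubC // => [[]].
have sep : separable_poly p.
  rewrite unlock; apply/Bezout_coprimepP.
  exists (-1, (m%:R)^-1 *: 'X).
  rewrite /p derivB derivXn derivC subr0 /=.
  have mz : (m%:R : C) != 0 by rewrite pnatr_eq0 -lt0n.
  have -> : (m%:R : C)^-1 *: 'X * ('X^(m.-1) *+ m) = 'X^m.
    rewrite -scalerAl mulrnAr -exprS prednK // -scaler_nat scalerA mulVf //.
    by rewrite scale1r.
  by rewrite mulN1r opprB subrK eqpxx.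
rewrite Hrs separable_prod_XsubC in sep.
have rsu : all m.-unity_root rs.
  apply/allP => z zr; rewrite unity_rootE.
  have : root p z by rewrite Hrs root_prod_XsubC.
  by rewrite /root /p !hornerE subr_eq0.
have := has_prim_root m0 rsu sep; rewrite sz leqnn => /(_ isT) /hasP [w _ Hw].
by exists w.
Qed.

Lemma idx_props (n k : nat) (i : 'I_n) (f : {ffun 'I_k -> 'I_n}) (e : {set 'I_n}) :
  #|e| = k.+1 -> @idxset n k.+1 i f = e ->
  [/\ i \notin [set f j | j : 'I_k], injective f & [set f j | j : 'I_k] = e :\ i].
Proof.
move=> + E; rewrite -E /idxset /= => ce; rewrite cardsU1 in ce.
have le : (#|[set f j | j : 'I_k]| <= k)%N by rewrite -[X in (_ <= X)%N]card_ord leq_imset_card.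
have [iN ck] : i \notin [set f j | j : 'I_k] /\ #|[set f j | j : 'I_k]| = k.
  move: ce le; case: (i \notin _) => /= ce le; first by rewrite add1n in ce; case: ce. by rewrite /nat_of_bool add0n in ce; rewrite ce ltnn in le.
split => //.
  move=> x y fxy.
  have : #|[set f j | j : 'I_k]| == #|'I_k| by rewrite ck card_ord.
  by move/imset_injP => H; apply: H; rewrite ?inE.
by rewrite setU1K.
Qed.

Lemma count_f (n k : nat) (i : 'I_n) (e : {set 'I_n}) :
  #|e| = k.+1 -> i \in e ->
  #|[set f : {ffun 'I_k -> 'I_n} | @idxset n k.+1 i f == e]| = k`!.
Proof.
move=> ce ie.
have cD : #|e :\ i| = k by move: ce; rewrite (cardsD1 i e) ie add1n => [[]].
rewrite -ffactnn; have := card_inj_ffuns_on 'I_k [pred x | x \in e :\ i]; rewrite card_ord.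
rewrite (eq_card (B := e :\ i)) // cD => <-.
apply: eq_card => f; rewrite !inE.
apply/eqP/andP => [H | [/ffun_onP fon /injectiveP finj]].
  have [_ finj im] := idx_props ce H.
  split; last by apply/injectiveP.
  by apply/ffun_onP => j; rewrite -im; apply: imset_f.
have im : [set f j | j : 'I_k] = e :\ i.
  apply/eqP; rewrite eqEcard; apply/andP; split.
    by apply/subsetP => x /imsetP [j _ ->]; apply: fon.
  by rewrite card_imset // card_ord cD.
by rewrite /idxset /= im setD1K.
Qed.

Lemma count_A (n k : nat) (E : {set {set 'I_n}}) (i : 'I_n) :
  uniform k.+1 E ->
  #|[set f : {ffun 'I_k -> 'I_n} | @idxset n k.+1 i f \in E]| = (hdeg E i * k`!)%N.
Proof.
move=> uE.
rewrite -sum1_card.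
rewrite (partition_big (fun f => @idxset n k.+1 i f) (fun e => (e \in E) && (i \in e))); last first.
  by move=> f; rewrite inE => ->; rewrite /idxset setU11.
rewrite /hdeg -sum1_card big_distrl /=.
rewrite [RHS](eq_bigl (fun e => (e \in E) && (i \in e))); last by move=> e; rewrite inE.
apply: eq_bigr => e /andP [eE ie].
rewrite mul1n -(count_f (uE e eE) ie) -sum1_card.
apply: eq_bigl => f; rewrite !inE; apply/andP/idP => [[] //|/eqP H].
by rewrite H eE.
Qed.

Definition good (C : numClosedFieldType) (n k : nat) (E : {set {set 'I_n}}) (x : 'I_n -> C) :=
  forall i (f : {ffun 'I_k -> 'I_n}), @idxset n k.+1 i f \in E ->
    \prod_(j < k) x (f j) = x i ^+ k.
Arguments good {C n} k E x.

Lemma stab_cond (C : numClosedFieldType) (t a P : C) :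
  a != 0 -> (t = a^-1 * t * P) <-> (t = 0 \/ P = a).
Proof.
move=> a0; split.
  have [-> | t0] := eqVneq t 0; first by left.
  move=> H; right; apply: (mulfI t0).
  rewrite {2}H; field.
  done.
case=> [->|->]; first by rewrite mulr0 mul0r.
by field.
Qed.

Lemma adj_nz (C : numClosedFieldType) (n k : nat) (E : {set {set 'I_n}}) i f :
  (@adjT C n k.+1 E i f != 0) = (@idxset n k.+1 i f \in E).
Proof.
rewrite /adjT; case: ifP => _; last by rewrite eqxx.
by rewrite invr_eq0 pnatr_eq0 -lt0n fact_gt0.
Qed.

Lemma stab_adj_iff (C : numClosedFieldType) (n k : nat) (E : {set {set 'I_n}}) d :
  stabilizes (@adjT C n k.+1 E) d <->
  [/\ (forall i, d i != 0), (forall i : 'I_n, val i = 0%N -> d i = 1) & good k E d].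
Proof.
split.
  move=> [d0 [d1 H]]; split => // i f iE.
  have := H i f; rewrite (stab_cond _ _ (expf_neq0 _ (d0 i))) => -[|] //.
  by move/eqP; rewrite -[_ == 0]negbK (adj_nz C) iE.
move=> [d0 d1 g]; split => //; split => // i f.
apply/(stab_cond _ _ (expf_neq0 _ (d0 i))).
case: (boolP (@idxset n k.+1 i f \in E)) => [/g -> | ]; first by right.
by rewrite -(adj_nz C) negbK => /eqP; left.
Qed.

Lemma degT_val (C : numClosedFieldType) (n k : nat) (E : {set {set 'I_n}}) i f :
  @degT C n k.+1 E i f = if f == [ffun _ => i] then (hdeg E i)%:R else 0.
Proof.
rewrite /degT; congr (if _ then _ else _).
apply/forallP/eqP => [H | -> j]; last by rewrite ffunE.
by apply/ffunP => j; rewrite ffunE; apply/eqP.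
Qed.

Lemma idx_const_notin (n k : nat) (E : {set {set 'I_n}}) i :
  (0 < k)%N -> uniform k.+1 E -> @idxset n k.+1 i [ffun _ => i] \notin E.
Proof.
move=> k0 uE; apply/negP => /uE.
have -> : @idxset n k.+1 i [ffun _ => i] = [set i].
  apply/setP => x; rewrite /idxset !inE.
  apply/orP/idP => [[//|/imsetP [j _ ->]]|->]; last by left.
  by rewrite ffunE.
by rewrite cards1 => -[] k0'; rewrite -k0' in k0.
Qed.

Lemma stab_lap_iff (C : numClosedFieldType) (n k : nat) (E : {set {set 'I_n}}) d :
  (0 < k)%N -> uniform k.+1 E ->
  stabilizes (@lapT C n k.+1 E) d <-> stabilizes (@adjT C n k.+1 E) d.
Proof.
move=> k0 uE; split => -[d0 [d1 H]]; split => //; split => // i f;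
  have := H i f; rewrite !(stab_cond _ _ (expf_neq0 _ (d0 i))) /lapT degT_val;
  case: eqP => [->|_].
- move=> _; left; rewrite /adjT ifN //; exact: idx_const_notin.
- rewrite sub0r => -[/eqP|]; last by right.
  by rewrite oppr_eq0 => /eqP; left.
- move=> _; right; rewrite (eq_bigr (fun _ => d i)); last by move=> j _; rewrite ffunE.
  by rewrite prodr_const card_ord.
- by rewrite sub0r => -[->|]; [left; rewrite oppr0|right].
Qed.

Lemma tapp_lap (C : numClosedFieldType) (n k : nat) (E : {set {set 'I_n}}) x i :
  tapp (@lapT C n k.+1 E) x i =
  (hdeg E i)%:R * x i ^+ k -
  ((k`!)%:R)^-1 * \sum_(f : {ffun 'I_k -> 'I_n} | @idxset n k.+1 i f \in E) \prod_(j < k) x (f j).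
Proof.
rewrite /tapp /lapT /=.
under eq_bigr do rewrite mulrBl.
rewrite sumrB; congr (_ - _).
  rewrite (bigD1 [ffun _ => i]) //= [X in _ + X]big1 ?addr0.
    rewrite degT_val eqxx; congr (_ * _).
    rewrite (eq_bigr (fun _ => x i)); last by move=> j _; rewrite ffunE.
    by rewrite prodr_const card_ord.
  by move=> f /negPf fn; rewrite degT_val fn mul0r.
rewrite mulr_sumr [RHS]big_mkcond /=; apply: eq_bigr => f _.
by rewrite /adjT; case: ifP => _; rewrite ?mul0r.
Qed.

Lemma exists_max_norm (C : numClosedFieldType) (I : finType) (F : I -> C) (i0 : I) :
  exists i, forall j, `|F j| <= `|F i|.
Proof.
suff [i [_ Hi]] : exists i, i \in i0 :: enum I /\ forall j, j \in i0 :: enum I -> `|F j| <= `|F i|.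
  by exists i => j; apply: Hi; rewrite inE mem_enum orbT.
elim: (enum I) => [|a s [i [ins Hi]]].
  by exists i0; split; rewrite ?inE // => j; rewrite inE => /eqP ->.
have /orP [le|le] := real_leVge (normr_real (F a)) (normr_real (F i)).
  exists i; split; first by move: ins; rewrite !inE => /orP [->|->]; rewrite ?orbT.
  move=> j; rewrite !inE => /or3P [/eqP->|/eqP->|js]; first by apply: Hi; rewrite inE eqxx.
    done.
  by apply: Hi; rewrite inE js orbT.
exists a; split; first by rewrite !inE eqxx orbT.
move=> j; rewrite !inE => /or3P [/eqP->|/eqP->|js] //.
  by apply: le_trans le; apply: Hi; rewrite inE eqxx.
by apply: le_trans le; apply: Hi; rewrite inE js orbT.
Qed.

Lemma prod_eq_max (C : numClosedFieldType) (k : nat) (a : 'I_k -> C) (M : C) :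
  0 < M -> (forall j, 0 <= a j <= M) -> \prod_(j < k) a j = M ^+ k ->
  forall t, a t = M.
Proof.
move=> M0 aM Hp t; apply/eqP; rewrite eq_le; have /andP [_ -> ] := aM t => /=.
have Q0 : 0 < \prod_(j < k | j != t) M by rewrite prodr_gt0.
rewrite -(ler_pM2r Q0).
have HM : \prod_(j < k) M = M ^+ k by rewrite prodr_const card_ord.
move: Hp; rewrite -HM (bigD1 t) //= [in RHS](bigD1 t) //= => Hp.
have [at0|at0] := eqVneq (a t) 0.
  by move: Hp; rewrite at0 mul0r => /esym/eqP; rewrite mulf_eq0 (gt_eqF M0) (gt_eqF Q0).
have at0' : 0 < a t by have /andP [a0 _] := aM t; rewrite lt_neqAle eq_sym at0.
rewrite -Hp ler_pM2l //.
by apply: ler_prod => j _; apply: aM.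
Qed.

Lemma sumA_const (C : numClosedFieldType) (n k : nat) (E : {set {set 'I_n}}) i (c : C) :
  uniform k.+1 E ->
  \sum_(f : {ffun 'I_k -> 'I_n} | @idxset n k.+1 i f \in E) c = c * (hdeg E i * k`!)%:R.
Proof.
move=> uE; rewrite sumr_const -(count_A i uE) mulr_natr; congr (_ *+ _).
by apply: eq_card => f; rewrite inE.
Qed.

Lemma eig_of_good (C : numClosedFieldType) (n k : nat) (E : {set {set 'I_n}}) x (i0 : 'I_n) :
  uniform k.+1 E -> (forall i, x i != 0) -> good k E x -> eigcone (@lapT C n k.+1 E) 0 x.
Proof.
move=> uE x0 g; split; first by exists i0.
move=> i; rewrite mul0r tapp_lap.
rewrite (eq_bigr (fun _ => x i ^+ k)); last by move=> f /g.
rewrite sumA_const // natrM mulrA mulrA mulrAC.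
have kf : (k`!%:R : C) != 0 by rewrite pnatr_eq0 -lt0n fact_gt0.
by rewrite mulVf // mul1r mulrC subrr.
Qed.

Lemma hadj_sym (n : nat) (E : {set {set 'I_n}}) u v : hadj E u v -> hadj E v u.
Proof.
by move=> /existsP [e /andP [eE /andP [ue ve]]]; apply/existsP; exists e; rewrite eE ue ve.
Qed.

Lemma good_of_eig (C : numClosedFieldType) (n k : nat) (E : {set {set 'I_n}}) x :
  (0 < k)%N -> uniform k.+1 E -> hconnected E -> eigcone (@lapT C n k.+1 E) 0 x ->
  (forall i, x i != 0) /\ good k E x.
Proof.
move=> k0 uE hc [[j0 xj0] H].
have [i0 Hmax] := exists_max_norm x j0.
set M := `|x i0| in Hmax.
have M0 : 0 < M by apply: lt_le_trans (Hmax j0); rewrite normr_gt0.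
have kf : (k`!%:R : C) != 0 by rewrite pnatr_eq0 -lt0n fact_gt0.
have key : forall i, `|x i| = M -> forall f : {ffun 'I_k -> 'I_n},
    @idxset n k.+1 i f \in E -> \prod_(j < k) x (f j) = x i ^+ k.
  move=> i xi f fA.
  have xi0 : x i != 0 by rewrite -normr_gt0 xi.
  have xk0 : x i ^+ k != 0 by rewrite expf_neq0.
  have Hs : \sum_(f : {ffun 'I_k -> 'I_n} | @idxset n k.+1 i f \in E) \prod_(j < k) x (f j)
          = \sum_(f : {ffun 'I_k -> 'I_n} | @idxset n k.+1 i f \in E) x i ^+ k.
    have := H i; rewrite mul0r tapp_lap => /eqP; rewrite subr_eq0 => /eqP Hi.
    apply: (mulfI (invr_neq0 kf)); rewrite -Hi sumA_const // natrM.
    by field.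
  have h1 : forall g : {ffun 'I_k -> 'I_n}, @idxset n k.+1 i g \in E ->
      `|\prod_(j < k) x (g j) / x i ^+ k| <= 1.
    move=> g _; rewrite normrM normfV normrX xi normr_prod.
    rewrite ler_pdivrMr ?exprn_gt0 // mul1r.
    have -> : M ^+ k = \prod_(j < k) M by rewrite prodr_const card_ord.
    by apply: ler_prod => j _; rewrite normr_ge0 Hmax.
  have h2 : \sum_(g : {ffun 'I_k -> 'I_n} | @idxset n k.+1 i g \in E) (\prod_(j < k) x (g j) / x i ^+ k)
        = \sum_(g : {ffun 'I_k -> 'I_n} | @idxset n k.+1 i g \in E) 1.
    rewrite -mulr_suml Hs mulr_suml; apply: eq_bigr => g _.
    by rewrite mulfV.
  have := normC_sum_upper h1 h2 fA => /= E1.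
  by rewrite -[LHS](divfK xk0) E1 mul1r.
have step : forall u v, hadj E u v -> `|x u| = M -> `|x v| = M.
  move=> u v /existsP [e /andP [eE /andP [ue ve]]] xu.
  have [->//|vu] := eqVneq v u.
  have : (0 < #|[set f : {ffun 'I_k -> 'I_n} | @idxset n k.+1 u f == e]|)%N.
    by rewrite count_f ?fact_gt0 // (uE e eE).
  case/card_gt0P => f; rewrite inE => /eqP fe.
  have fA : @idxset n k.+1 u f \in E by rewrite fe.
  have Pf := key u xu f fA.
  move: ve; rewrite -fe /idxset !inE (negPf vu) /= => /imsetP [t _ ->].
  apply: (prod_eq_max (a := fun j => `|x (f j)|)) => //.
    by move=> j; rewrite normr_ge0 Hmax.
  by rewrite -normr_prod Pf normrX xu.
have closedZ : closed (hadj E) [pred v | `|x v| == M].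
  move=> u v huv; rewrite !inE; apply/idP/idP => /eqP h; apply/eqP.
    exact: step h.
  exact: step (hadj_sym huv) h.
have allM : forall v, `|x v| = M.
  move=> v; have := closed_connect closedZ (hc i0 v).
  by rewrite !inE eqxx => /esym/eqP.
split; last by move=> i f; apply: key.
by move=> v; rewrite -normr_gt0 allM.
Qed.

Lemma Zp_natr_eq0 (p N : nat) : ((N%:R : 'Z_(p.+2)) == 0) = (p.+2 %| N)%N.
Proof. by rewrite Zp_nat -val_eqE /= /dvdn. Qed.

Lemma Zp_sum_val (p : nat) (I : finType) (P : pred I) (F : I -> 'Z_(p.+2)) :
  \sum_(i | P i) F i = (\sum_(i | P i) (val (F i)))%:R.
Proof. by rewrite natr_sum; apply: eq_bigr => i _; rewrite natr_Zp. Qed.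

Lemma rowB (n p : nat) (E : {set {set 'I_n}}) (y : 'cV['Z_(p.+2)]_n) :
  (@incidence n p.+2 E *m y == 0) =
  [forall e in E, p.+2 %| \sum_(v in e) val (y v ord0)]%N.
Proof.
apply/eqP/forall_inP => [H e eE | H].
  have := congr1 (fun M : 'cV['Z_(p.+2)]_#|E| => M (enum_rank_in eE e) ord0) H.
  rewrite !mxE => /eqP; rewrite -Zp_natr_eq0 -Zp_sum_val.
  move=> h; rewrite (_ : \sum_(i in e) y i ord0 = \sum_j incidence p.+2 E (enum_rank_in eE e) j * y j ord0) //.
  rewrite big_mkcond /=; apply: eq_bigr => v _; rewrite mxE (enum_rankK_in eE eE).
  by case: (v \in e); rewrite ?mul1r ?mul0r.
apply/matrixP => r j; rewrite ord1 !mxE.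
rewrite (_ : \sum_j0 _ = \sum_(i in enum_val r) y i ord0).
  by apply/eqP; rewrite Zp_sum_val Zp_natr_eq0 H // enum_valP.
rewrite [RHS]big_mkcond; apply: eq_bigr => v _; rewrite mxE.
by case: (v \in _); rewrite ?mul1r ?mul0r.
Qed.

Definition phi (C : numClosedFieldType) (p n : nat) (w : C) (y : 'cV['Z_(p.+2)]_n) : 'I_n -> C :=
  fun i => w ^+ val (y i ord0).

Lemma prod_img (C : numClosedFieldType) (n k : nat) (i : 'I_n) (f : {ffun 'I_k -> 'I_n})
   (e : {set 'I_n}) (F : 'I_n -> C) :
  #|e| = k.+1 -> @idxset n k.+1 i f = e ->
  \prod_(j < k) F (f j) = \prod_(v in e :\ i) F v.
Proof.
move=> ce fe; have [_ finj im] := idx_props ce fe.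
by rewrite -im big_imset //= => a b _ _; apply: finj.
Qed.

Lemma sum_img (n k : nat) (i : 'I_n) (f : {ffun 'I_k -> 'I_n})
   (e : {set 'I_n}) (F : 'I_n -> nat) :
  #|e| = k.+1 -> @idxset n k.+1 i f = e ->
  (\sum_(j < k) F (f j) = \sum_(v in e :\ i) F v)%N.
Proof.
move=> ce fe; have [_ finj im] := idx_props ce fe.
by rewrite -im big_imset //= => a b _ _; apply: finj.
Qed.

Lemma good_phi (C : numClosedFieldType) (n p : nat) (E : {set {set 'I_n}}) (w : C) y :
  uniform p.+2 E -> p.+2.-primitive_root w -> @incidence n p.+2 E *m y == 0 ->
  good p.+1 E (phi w y).
Proof.
move=> uE pw; rewrite rowB => /forall_inP H i f fE.
set e := @idxset n p.+2 i f in fE.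
have ce := uE e fE.
have ie : i \in e by rewrite /e /idxset setU11.
rewrite /phi prodrXr -exprM (sum_img (fun v => val (y v ord0)) ce erefl).
apply/eqP; rewrite (eq_prim_root_expr pw) -(eqn_modDr (val (y i ord0))).
have := H e fE; rewrite (bigD1 i) //= => dv.
have -> : (\sum_(v in e :\ i) val (y v ord0) + val (y i ord0) =
           \sum_(v in e | v != i) val (y v ord0) + val (y i ord0))%N.
  by congr (_ + _)%N; apply: eq_bigl => v; rewrite !inE andbC.
rewrite addnC (eqP dv).
by rewrite -mulnSr modnMl.
Qed.

Lemma good_inv (C : numClosedFieldType) (n p : nat) (E : {set {set 'I_n}}) (w : C) d (i0 : 'I_n) :
  uniform p.+2 E -> hconnected E -> p.+2.-primitive_root w ->
  (forall i, d i != 0) -> d i0 = 1 -> good p.+1 E d ->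
  exists y : 'cV['Z_(p.+2)]_n,
    ((@incidence n p.+2 E *m y == 0) && (y i0 ord0 == 0)) /\ forall i, d i = phi w y i.
Proof.
move=> uE hc pw d0 d1 g.
have edge : forall e, e \in E -> forall u, u \in e -> d u ^+ p.+2 = \prod_(v in e) d v.
  move=> e eE u ue; have ce := uE e eE.
  have : (0 < #|[set f : {ffun 'I_p.+1 -> 'I_n} | @idxset n p.+2 u f == e]|)%N.
    by rewrite count_f ?fact_gt0.
  case/card_gt0P => f; rewrite inE => /eqP fe.
  have fE : @idxset n p.+2 u f \in E by rewrite fe.
  have := g u f fE; rewrite (prod_img d ce fe) => h.
  rewrite (bigD1 u) //= exprS -h; congr (_ * _).
  by apply: eq_bigl => v; rewrite !inE andbC.
have unity : forall v, d v ^+ p.+2 = 1.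
  have closedZ : closed (hadj E) [pred v | d v ^+ p.+2 == d i0 ^+ p.+2].
    suff st : forall u v, hadj E u v -> d u ^+ p.+2 = d v ^+ p.+2.
      by move=> u v huv; rewrite !inE (st u v huv).
    move=> u v /existsP [e /andP [eE /andP [ue ve]]].
    by rewrite (edge e eE u ue) (edge e eE v ve).
  move=> v; have := closed_connect closedZ (hc i0 v).
  by rewrite !inE eqxx d1 expr1n => /esym/eqP.
have ha : forall i, {a : 'I_(p.+2) | d i = w ^+ a} := fun i => prim_rootP pw (unity i).
exists (\col_i (sval (ha i) : 'Z_(p.+2))).
have ph : forall i, d i = phi w (\col_i (sval (ha i) : 'Z_(p.+2))) i.
  by move=> i; rewrite /phi mxE; case: (ha i).
split => //; apply/andP; split.
  rewrite rowB; apply/forall_inP => e eE.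
  have : (0 < #|e|)%N by rewrite (uE e eE).
  case/card_gt0P => u ue.
  rewrite (prim_order_dvd pw) -prodrXr.
  rewrite (eq_bigr (fun v => d v)); last by move=> v _; rewrite [RHS]ph.
  by rewrite -(edge e eE u ue) unity.
rewrite mxE; case: (ha i0) => a /= ha0.
have : (p.+2 %| a)%N by rewrite (prim_order_dvd pw) -ha0 d1.
by rewrite /dvdn modn_small // => /eqP a0.
Qed.


Lemma card_cV_family (p n : nat) (F : 'I_n -> pred 'Z_(p.+2)) :
  #|[set z : 'cV['Z_(p.+2)]_n | [forall j, z j ord0 \in F j]]| = (\prod_(j < n) #|F j|)%N.
Proof.
pose psi (z : 'cV['Z_(p.+2)]_n) : {ffun 'I_n -> 'Z_(p.+2)} := [ffun j => z j ord0].
have psi_inj : injective psi.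
  move=> z z' /ffunP H; apply/matrixP => i j; rewrite ord1.
  by have := H i; rewrite !ffunE.
rewrite -(card_imset _ psi_inj).
have -> : (\prod_(j < n) #|F j| = #|(family F : simpl_pred {ffun 'I_n -> 'Z_(p.+2)})|)%N.
  rewrite card_family /image_mem -big_enum /= -(big_map _ predT (fun x => x)) unlock /reducebig.
  by elim: (enum _) => //= a s ->.
apply: eq_card => g; rewrite inE.
apply/imsetP/familyP => [[z] | H].
  by rewrite inE => /forallP H -> j; rewrite ffunE.
exists (\col_j g j); last by apply/ffunP => j; rewrite ffunE mxE.
by rewrite inE; apply/forallP => j; rewrite mxE.
Qed.

Lemma card_ann (p d : nat) : (0 < d)%N -> (d %| p.+2)%N ->
  #|[pred t : 'Z_(p.+2) | d%:R * t == 0]| = d.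
Proof.
move=> d0 dm.
set q := (p.+2 %/ d)%N.
have mq : p.+2 = (d * q)%N by rewrite /q mulnC divnK.
have q0 : (0 < q)%N by move: mq; case: (q) => //; rewrite muln0.
have pr : forall t : 'Z_(p.+2), (d%:R * t == 0) = (q %| t)%N.
  move=> t; rewrite -[t in d%:R * t]natr_Zp -natrM Zp_natr_eq0 {1}mq.
  by rewrite dvdn_pmul2l.
pose g (k : 'I_d) : 'Z_(p.+2) := inord (k * q).
have gv : forall k : 'I_d, (g k : nat) = (k * q)%N.
  move=> k; rewrite /g inordK //.
  by have := ltn_pmul2r (n1 := k) (n2 := d) q0; rewrite ltn_ord -mq.
have ginj : injective g.
  move=> k l /(congr1 (fun x : 'Z_(p.+2) => (x : nat))) /=; rewrite !gv => /eqP; rewrite eqn_pmul2r // => /eqP kl.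
  exact: val_inj.
rewrite -[RHS](card_ord d) -(card_imset _ ginj).
apply: eq_card => t; rewrite inE pr; apply/idP/imsetP => [qt | [k _ ->]].
  have tk : (t %/ q < d)%N by rewrite ltn_divLR // -mq.
  exists (Ordinal tk) => //; apply: ord_inj; rewrite gv /= divnK //.
by rewrite gv dvdn_mull.
Qed.

Lemma inc_const (n p : nat) (E : {set {set 'I_n}}) (c : 'Z_(p.+2)) :
  uniform p.+2 E -> @incidence n p.+2 E *m (const_mx c : 'cV_n) = 0.
Proof.
move=> uE; apply/matrixP => r j; rewrite !mxE.
rewrite (eq_bigr (fun v => if v \in enum_val r then c else 0)); last first.
  by move=> v _; rewrite !mxE; case: (v \in _); rewrite ?mul1r ?mul0r.
rewrite -big_mkcond sumr_const (uE _ (enum_valP r)) -mulr_natr.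
have : ((p.+2)%:R : 'Z_(p.+2)) == 0 by rewrite Zp_natr_eq0.
by move/eqP ->; rewrite mulr0.
Qed.

Lemma card_K_S (n p : nat) (E : {set {set 'I_n.+1}}) :
  uniform p.+2 E ->
  #|[set y : 'cV['Z_(p.+2)]_n.+1 | @incidence n.+1 p.+2 E *m y == 0]| =
  (#|[set y : 'cV['Z_(p.+2)]_n.+1 | (@incidence n.+1 p.+2 E *m y == 0%R) && (y ord0 ord0 == 0%R)]| * p.+2)%N.
Proof.
move=> uE.
set K := [set y : 'cV['Z_(p.+2)]_n.+1 | @incidence n.+1 p.+2 E *m y == 0].
set S := [set y : 'cV['Z_(p.+2)]_n.+1 | (@incidence n.+1 p.+2 E *m y == 0) && (y ord0 ord0 == 0)].
pose h (yc : 'cV['Z_(p.+2)]_n.+1 * 'Z_(p.+2)) := yc.1 + const_mx yc.2.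
have hinj : {in setX S setT &, injective h}.
  move=> [y c] [y' c'] /setXP [] + _ /setXP [] + _; rewrite !inE /h /=.
  move=> /andP [_ /eqP y0] /andP [_ /eqP y0'] H.
  have cc : c = c'.
    by have := congr1 (fun M : 'cV_n.+1 => M ord0 ord0) H; rewrite /= !mxE y0 y0' !add0r.
  by rewrite cc in H *; rewrite (addIr _ H).
have cX : #|setX S [set: 'Z_(p.+2)]| = (#|S| * p.+2)%N by rewrite cardsX cardsT card_ord.
rewrite -cX -(card_in_imset hinj).
apply: eq_card => y; rewrite inE; apply/idP/imsetP => [Ky | [[s c] /setXP [sS _] ->]].
  exists (y - const_mx (y ord0 ord0), y ord0 ord0); last by rewrite /h /= subrK.
  rewrite inE /= inE in_setT andbT mulmxBr inc_const // subr0 Ky /=.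
  by rewrite !mxE subrr.
move: sS; rewrite inE => /andP [/eqP Ks _].
by rewrite /h /= mulmxDr Ks inc_const // addr0.
Qed.

Lemma card_K_smith (n p : nat) (E : {set {set 'I_n}}) (ds : seq nat) :
  smith_form_Zm (@incidence n p.+2 E) ds ->
  #|[set y : 'cV['Z_(p.+2)]_n | @incidence n p.+2 E *m y == 0]| =
  (p.+2 ^ (n - size ds) * \prod_(d <- ds) d)%N /\
  (uniform p.+2 E -> (0 < n)%N -> (size ds < n)%N).
Proof.
move=> [szr [/allP alld [srt [/allP dvd [P [Q [Pu [Qu HD]]]]]]]].
set r := size ds in szr HD *.
set B := @incidence n p.+2 E in HD *.
have rE : (r <= #|E|)%N by move: szr; rewrite leq_min => /andP [].
have rn : (r <= n)%N by move: szr; rewrite leq_min => /andP [].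
pose D := P *m B *m Q.
have Dz : forall z : 'cV['Z_(p.+2)]_n, (D *m z == 0) =
    [forall j : 'I_n, (j < r)%N ==> ((nth 0%N ds j)%:R * z j ord0 == 0)].
  move=> z; apply/eqP/forallP => [H j | H].
    apply/implyP => jr.
    have ir : (j < #|E|)%N by apply: leq_trans rE.
    have := congr1 (fun M : 'cV_#|E| => M (Ordinal ir) ord0) H; rewrite /= !mxE.
    rewrite (bigD1 j) //= HD /= eqxx jr /= big1 ?addr0 => [->//|j' jj'].
    rewrite HD /=; case: eqP => [/ord_inj jj|_]; last by rewrite mul0r.
    by rewrite jj eqxx in jj'.
  apply/matrixP => i c; rewrite ord1 !mxE big1 // => j _.
  rewrite HD; case: andP => [[/eqP ij ir]|_]; last by rewrite mul0r.
  have := H j; rewrite -ij ir /= => /eqP.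
  by rewrite /= ij.
have KK : #|[set y : 'cV['Z_(p.+2)]_n | B *m y == 0]| = #|[set z : 'cV['Z_(p.+2)]_n | D *m z == 0]|.
  have Qinj : injective (mulmx Q : 'cV['Z_(p.+2)]_n -> 'cV_n).
    by move=> a b /(congr1 (mulmx (invmx Q))); rewrite !mulKmx.
  rewrite -[RHS](card_imset _ Qinj); apply: eq_card => y; rewrite inE.
  apply/idP/imsetP => [By | [z] ].
    exists (invmx Q *m y); last by rewrite mulKVmx.
    by rewrite inE /D -!mulmxA mulKVmx // (eqP By) mulmx0.
  rewrite inE /D => /eqP Dz0 ->.
  have := congr1 (mulmx (invmx P)) Dz0.
  by rewrite mulmx0 -!mulmxA mulKmx // mulmxA => ->.
have card1 : #|[set z : 'cV['Z_(p.+2)]_n | D *m z == 0]| =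
    (\prod_(j < n) (if (j < r)%N then nth 0%N ds j else p.+2))%N.
  pose F := (fun j : 'I_n => if (j < r)%N then [pred t : 'Z_(p.+2) | (nth 0%N ds j)%:R * t == 0] else predT).
  rewrite [RHS](eq_bigr (fun j : 'I_n => #|F j|)); last first.
    move=> j _; rewrite /F; case: ifP => jr; last by rewrite card_ord.
    have dm : nth 0%N ds j \in ds by rewrite mem_nth.
    have := alld _ dm; case/andP => d1 _.
    by rewrite card_ann //; apply: dvd.
  rewrite -card_cV_family; apply: eq_card => z; rewrite !inE Dz.
  by apply/forallP/forallP => H j; have := H j; rewrite /F; case: (j < r)%N.
have prodv : (\prod_(j < n) (if (j < r)%N then nth 0%N ds j else p.+2) =
    p.+2 ^ (n - r) * \prod_(d <- ds) d)%N.
  rewrite -(big_mkord predT (fun j => if (j < r)%N then nth 0%N ds j else p.+2)).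
  rewrite (big_cat_nat (leq0n r) rn) /= mulnC; congr (_ * _)%N.
    rewrite -prod_nat_const_nat big_nat_cond [RHS]big_nat_cond; apply: eq_bigr => j.
    by rewrite andbT => /andP [/leq_gtF -> _].
  rewrite [RHS](big_nth 0%N) big_nat_cond [RHS]big_nat_cond; apply: eq_bigr => j.
  by rewrite andbT => /andP [_ ->].
split; first by rewrite KK card1 prodv.
move=> uE n0; rewrite ltn_neqAle rn andbT; apply/eqP => rn'.
have r0 : (0 < r)%N by rewrite rn'.
set L := nth 0%N ds r.-1.
have Lin : L \in ds by rewrite mem_nth // prednK.
have dL : forall j, (j < r)%N -> (nth 0%N ds j %| L)%N.
  move=> j jr; apply: (sorted_leq_nth dvdn_trans dvdnn) => //; rewrite ?inE ?prednK //.
  by rewrite -ltnS prednK.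
pose c : 'cV['Z_(p.+2)]_n := const_mx 1.
pose z := invmx Q *m c.
have Dz0 : D *m z == 0.
  by rewrite /D /z -!mulmxA mulKVmx // inc_const // mulmx0.
move: Dz0; rewrite Dz => /forallP Hz.
have Lz0 : forall z' : 'cV['Z_(p.+2)]_n,
    (forall j : 'I_n, (nth 0%N ds j)%:R * z' j ord0 = 0) -> (L%:R : 'Z_(p.+2)) *: z' = 0.
  move=> z' H; apply/matrixP => j o; rewrite ord1 !mxE.
  have jr : (j < r)%N by rewrite rn'.
  by rewrite -(divnK (dL j jr)) natrM -mulrA H mulr0.
have Lz : (L%:R : 'Z_(p.+2)) *: z = 0.
  apply: Lz0 => j; have := Hz j; have jr : (j < r)%N by rewrite rn'.
  by rewrite jr /= => /eqP.
have : (L%:R : 'Z_(p.+2)) *: c = 0.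
  by rewrite -[c](mulKVmx Qu) scalemxAr -/z Lz mulmx0.
move/matrixP => /(_ (Ordinal n0) ord0); rewrite !mxE mulr1 => /eqP.
rewrite Zp_natr_eq0 => /dvdn_leq.
have := alld _ Lin; case/andP => L1 Lm.
by move=> /(_ L1); rewrite leqNgt (leq_ltn_trans Lm).
Qed.


Lemma phi_inj (C : numClosedFieldType) (n p : nat) (w : C) (y y' : 'cV['Z_(p.+2)]_n) :
  p.+2.-primitive_root w -> (forall i, phi w y i = phi w y' i) -> y = y'.
Proof.
move=> pw H; apply/matrixP => i j; rewrite ord1.
have := H i; rewrite /phi => /eqP; rewrite (eq_prim_root_expr pw) !modn_small ?ltn_ord // => /eqP h.
exact: ord_inj.
Qed.

Lemma good_scale (C : numClosedFieldType) (n k : nat) (E : {set {set 'I_n}}) (x : 'I_n -> C) (c : C) :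
  c != 0 -> good k E x -> good k E (fun i => x i / c).
Proof.
move=> c0 g i f fE; rewrite prodf_div (g i f fE) expr_div_n; congr (_ / _).
by rewrite prodr_const card_ord.
Qed.

Theorem theorem3p5 (R : realType) (n m : nat) (E : {set {set 'I_n}})
  (ds : seq nat) :
  (2 <= m)%N -> (0 < n)%N ->
  @uniform n m E -> hconnected E ->
  smith_form_Zm (@incidence n m E) ds ->
  let N := (m ^ (n.-1 - size ds) * \prod_(d <- ds) d)%N in
  proj_card (eigcone (@lapT R[i] n m E) 0) N /\
  stab_index_is (@lapT R[i] n m E) N /\
  stab_index_is (@adjT R[i] n m E) N.
Proof.
case: m => [|[|p]] // _.
case: n E => [//|n] E _ uE hc sm N.
have [w pw] := prim_root_ex R[i] (ltn0Sn p.+1).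
have w0 : w != 0.
  by apply/eqP => w0; have := prim_expr_order pw; rewrite w0 expr0n /= => /eqP; rewrite eq_sym oner_eq0.
set S := [set y : 'cV['Z_(p.+2)]_n.+1 | (@incidence n.+1 p.+2 E *m y == 0) && (y ord0 ord0 == 0)].
have cardS : #|S| = N.
  have [cK rlt] := card_K_smith sm.
  have r := rlt uE (ltn0Sn n).
  have := card_K_S uE; rewrite cK -/S /N /= subSn // expnS -mulnA mulnC.
  by move/eqP; rewrite eqn_pmul2r // => /eqP.
pose Y (k : 'I_N) := enum_val (cast_ord (esym cardS) k).
have YS : forall k, Y k \in S by move=> k; apply: enum_valP.
have Yinj : injective Y.
  by move=> k l /enum_val_inj /(congr1 val) /= kl; apply: val_inj.
have Ysurj : forall y, y \in S -> exists k, y = Y k.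
  move=> y yS; exists (cast_ord cardS (enum_rank_in yS y)).
  by rewrite /Y cast_ordK enum_rankK_in.
pose X (k : 'I_N) := phi w (Y k).
have Xinj : forall k l, (forall i, X k i = X l i) -> k = l.
  by move=> k l H; apply: Yinj; apply: (phi_inj pw).
have Xgood : forall k, good p.+1 E (X k).
  by move=> k; have := YS k; rewrite inE => /andP [H _]; apply: good_phi.
have Xnz : forall k i, X k i != 0 by move=> k i; rewrite /X /phi expf_neq0.
have X0 : forall k (i : 'I_n.+1), val i = 0%N -> X k i = 1.
  move=> k i i0; have -> : i = ord0 by apply: val_inj.
  by have := YS k; rewrite inE /X /phi => /andP [_ /eqP ->].
have Xstab : forall k, stabilizes (@adjT R[i] n.+1 p.+2 E) (X k).
  by move=> k; apply/stab_adj_iff; split; [apply: Xnz | apply: X0 | apply: Xgood].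
have stab_surj : forall d, stabilizes (@adjT R[i] n.+1 p.+2 E) d -> exists k, d = X k.
  move=> d /stab_adj_iff [d0 d1 g].
  have [y [yS dy]] := good_inv uE hc pw d0 (d1 ord0 erefl) g.
  have [k yk] := Ysurj y ltac:(by rewrite inE).
  by exists k; apply: functional_extensionality => i; rewrite dy yk.
have adjC : stab_index_is (@adjT R[i] n.+1 p.+2 E) N.
  exists X; split; last split => //.
  by move=> k l kl; apply: Xinj => i; rewrite kl.
split; last split => //.
- exists X; split; last split.
  + by move=> k; apply: eig_of_good => //; exact: ord0.
  + move=> k l [c [c0 H]]; apply: Xinj => i.
    have := H ord0; rewrite (X0 k ord0) // (X0 l ord0) // mulr1 => c1.
    by rewrite H -c1 mul1r.
  + move=> x /(good_of_eig (ltn0Sn p) uE hc) [xnz g].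
    have x0 := xnz ord0.
    have [k dk] : exists k, (fun i => x i / x ord0) = X k.
      apply: stab_surj; apply/stab_adj_iff; split.
      * by move=> i; rewrite mulf_neq0 ?invr_eq0.
      * move=> i i0; have -> : i = ord0 by apply: val_inj.
        by rewrite mulfV.
      * exact: good_scale.
    exists k; exists (x ord0); split => // i.
    by rewrite -dk mulrC divfK.
- exists X; split; last split.
  + by move=> k l kl; apply: Xinj => i; rewrite kl.
  + by move=> k; apply/(stab_lap_iff _ (ltn0Sn p) uE).
  + by move=> d /(stab_lap_iff _ (ltn0Sn p) uE); apply: stab_surj.
Qed.
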